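(* Let $\epsilon\in[0,1]$, let $\theta$ be any softmax parameter, and let $\hat\xi=(\hat\xi_1,\dots,\hat\xi_n)$ be the $\epsilon$-exploration policy of $\xi^\theta$, i.e. $\hat\xi_i(a_i\mid s_i)=(1-\epsilon)\xi_i^{\theta_i}(a_i\mid s_i)+\epsilon/|\mathcal A_i|$ for all $i,s_i,a_i$. Then for every agent $i$, $$\max_{s\in\mathcal S,\,a_i\in\mathcal A_i}\left|\overline Q_i^{\hat\xi}(s,a_i)-\overline Q_i^{\xi^\theta}(s,a_i)\right|\le\frac{6n\epsilon}{(1-\gamma)^2}.$$
   Context: Networked Markov game. There are $n$ agents $\mathcal N=\{1,\dots,n\}$ placed at the nodes of an undirected graph $\mathcal G=(\mathcal N,\mathcal E)$ with graph distance $\mathrm{dist}$. For an integer $\kappa\ge0$, $N_i^\kappa=\{j\in\mathcal N:\mathrm{dist}(i,j)\le\kappa\}$ (so $i\in N_i^\kappa$), $\mathcal N_i=N_i^1$, $-N_i^\kappa=\mathcal N\setminus N_i^\kappa$, and $n(\kappa)=\max_i|N_i^\kappa|$. Agent $i$ has a finite local state space $\mathcal S_i$ and a finite local action space $\mathcal A_i$; $\mathcal S=\prod_i\mathcal S_i$, $\mathcal A=\prod_i\mathcal A_i$, and for $I\subseteq\mathcal N$ we write $s_I,a_I,\mathcal S_I,\mathcal A_I$ for the joint states/actions/spaces of the agents in $I$ (the subscript $-i$ means $\mathcal N\setminus\{i\}$). The dynamics are $\mathcal P(s'\mid s,a)=\prod_i\mathcal P_i(s_i'\mid s_{\mathcal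 N_i},a_i)$, the initial distribution is $\mu\in\Delta(\mathcal S)$, and $\gamma\in(0,1)$ is a discount factor. Each agent has a reward $r_i:\mathcal S\times\mathcal A\to[0,1]$ depending only on $(s_{N_i^{\kappa_r}},a_{N_i^{\kappa_r}})$ for a fixed integer $\kappa_r\ge0$. A joint policy $\xi=(\xi_1,\dots,\xi_n)$ acts by $\xi(a\mid s)=\prod_i\xi_i(a_i\mid s_i)$. For a joint policy $\xi$: $Q_i^\xi(s,a)=\sum_{t\ge0}\gamma^t\mathbb E_\xi[r_i(s(t),a(t))\mid s(0)=s,a(0)=a]$; $\overline Q_i^\xi(s,a_i)=\mathbb E_{a_{-i}\sim\xi_{-i}(\cdot\mid s_{-i})}Q_i^\xi(s,a_i,a_{-i})$. Softmax policies: for $\theta_i\in\mathbb R^{|\mathcal S_i||\mathcal A_i|}$, $\xi_i^{\theta_i}(a_i\mid s_i)=\exp(\theta_{i,s_i,a_i})/\sum_{a_i'\in\mathcal A_i}\exp(\theta_{i,s_i,a_i'})$; $\xi^\theta=(\xi_1^{\theta_1},\dots,\xi_n^{\theta_n})$. *)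

(* Defs.v *)
From HB Require Import structures.
From mathcomp Require Import all_boot all_order all_algebra.
From mathcomp Require Import all_classical all_reals all_analysis.
Set Implicit Arguments. Unset Strict Implicit. Unset Printing Implicit Defensive.
Import Order.TTheory GRing.Theory Num.Theory.
Local Open Scope ring_scope.

Section NetGame.
Variables (R : realType) (n : nat).
Variables (S A : 'I_n -> finType).

Definition jstate := {dffun forall i : 'I_n, S i}.
Definition jaction := {dffun forall i : 'I_n, A i}.

Fixpoint dist_le (e : rel 'I_n) (k : nat) (i j : 'I_n) : bool :=
  match k with
  | 0 => i == j
  | k'.+1 => dist_le e k' i j || [exists l, e i l && dist_le e k' l j]
  end.

(* local transition kernels P i s a_i s_i' = P_i(s_i' | s_{N_i}, a_i) *)
Definition local_kernel := forall i : 'I_n, jstate -> A i -> S i -> R.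
Definition local_policy := forall i : 'I_n, S i -> A i -> R.

Definition jtrans (P : local_kernel) (s : jstate) (a : jaction) (s' : jstate) : R :=
  \prod_(i < n) P i s (a i) (s' i).

Definition jpol (xi : local_policy) (s : jstate) (a : jaction) : R :=
  \prod_(i < n) xi i (s i) (a i).

Fixpoint exp_reward (P : local_kernel) (xi : local_policy)
    (r : jstate -> jaction -> R) (t : nat) (s : jstate) (a : jaction) : R :=
  match t with
  | 0 => r s a
  | t'.+1 => \sum_(s' : jstate) jtrans P s a s' *
              \sum_(a' : jaction) jpol xi s' a' * exp_reward P xi r t' s' a'
  end.

Definition Qfun (P : local_kernel) (gamma : R) (xi : local_policy)
    (r : jstate -> jaction -> R) (s : jstate) (a : jaction) : R :=
  limn (fun N : nat => \sum_(0 <= t < N) gamma ^+ t * exp_reward P xi r t s a).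

Definition Qbar (P : local_kernel) (gamma : R) (xi : local_policy)
    (r : jstate -> jaction -> R) (i : 'I_n) (s : jstate) (ai : A i) : R :=
  \sum_(a : jaction | a i == ai)
     (\prod_(j < n | j != i) xi j (s j) (a j)) * Qfun P gamma xi r s a.

Definition softmax (theta : forall i : 'I_n, S i -> A i -> R) : local_policy :=
  fun i si ai => expR (theta i si ai) / \sum_(b : A i) expR (theta i si b).

Definition explore (eps : R) (xi : local_policy) : local_policy :=
  fun i si ai => (1 - eps) * xi i si ai + eps / #|A i|%:R.

End NetGame.

(* Main.v *)
Require Import Defs.
From HB Require Import structures.
From mathcomp Require Import all_boot all_order all_algebra.
From mathcomp Require Import all_classical all_reals all_analysis.
From mathcomp Require Import ring lra.
Import Order.TTheory GRing.Theory Num.Theory.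
Local Open Scope ring_scope.
Set Implicit Arguments. Unset Strict Implicit. Unset Printing Implicit Defensive.

Lemma sum_prod_dffun (R : comNzRingType) (I : finType) (T_ : I -> finType)
  (F : forall i, T_ i -> R) :
  \sum_(a : {dffun forall i, T_ i}) \prod_i F i (a i) = \prod_i \sum_(b : T_ i) F i b.
Proof.
transitivity (\prod_i \sum_(j in tagged_with T_ i) untag 0 (F i) j); last first.
  by apply: eq_bigr => i _; rewrite (big_tag F i).
rewrite bigA_distr_big_dep.
have := @big_fprod R 0 1 *%R +%R _ T_ (fun i => [ffun b => F i b]).
have -> : \sum_(f in family (tagged_with T_)) \prod_i untag 0 (F i) (f i) =
   \sum_(f in family (tagged_with T_)) \prod_i untag 0 ([ffun b => F i b]) (f i).
  apply: eq_bigr => f _; apply: eq_bigr => i _; congr untag.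
  by apply: funext => b; rewrite ffunE.
move=> <-.
rewrite (reindex (@dffun_of_fprod _ T_)); last exact/onW_bij/dffun_of_fprod_bij.
apply: eq_bigr => t _; apply: eq_bigr => i _.
by rewrite !ffunE.
Qed.

Lemma prod_le_bound (R : realType) (I : finType) (x : I -> R) (k : I) (d : R) :
  (forall i, 0 <= x i) -> (forall i, i != k -> x i <= 1) -> x k <= d ->
  \prod_i x i <= d.
Proof.
move=> x0 x1 xk; rewrite (bigD1 k) //=.
have P0 : 0 <= \prod_(i | i != k) x i by apply: prodr_ge0.
have P1 : \prod_(i | i != k) x i <= 1.
  apply: (le_trans (@ler_prod _ _ _ _ _ (fun=> 1) _)); last by rewrite big1_eq.
  by move=> i ik; rewrite x0 x1.
by rewrite -[d]mulr1; apply: ler_pM.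
Qed.

Lemma sum_prod_le1 (R : realType) (I : finType) (T_ : I -> finType)
  (p : forall i, T_ i -> R) :
  (forall i b, 0 <= p i b) -> (forall i, \sum_b p i b <= 1) ->
  \sum_(a : {dffun forall i, T_ i}) \prod_i p i (a i) <= 1.
Proof.
move=> p0 p1; rewrite sum_prod_dffun.
apply: (le_trans (@ler_prod _ _ _ _ _ (fun=> 1) _)); last by rewrite big1_eq.
by move=> i _; rewrite p1 sumr_ge0.
Qed.

Lemma sum_prod_ge0 (R : realType) (I : finType) (T_ : I -> finType)
  (p : forall i, T_ i -> R) (a : {dffun forall i, T_ i}) :
  (forall i b, 0 <= p i b) -> 0 <= \prod_i p i (a i).
Proof. by move=> p0; apply: prodr_ge0. Qed.

Lemma tv_prod (R : realType) (n : nat) (T_ : 'I_n -> finType)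
  (p q : forall i, T_ i -> R) (d : R) :
  (forall i b, 0 <= p i b) -> (forall i b, 0 <= q i b) ->
  (forall i, \sum_b p i b <= 1) -> (forall i, \sum_b q i b <= 1) ->
  (forall i, \sum_b `|p i b - q i b| <= d) ->
  \sum_(a : {dffun forall i, T_ i}) `|\prod_i p i (a i) - \prod_i q i (a i)|
    <= n%:R * d.
Proof.
move=> p0 q0 p1 q1 pqd.
pose c (k : nat) i (b : T_ i) := if (i < k)%N then p i b else q i b.
pose h (k : nat) (a : {dffun forall i, T_ i}) := \prod_i c k i (a i).
have c0 k i b : 0 <= c k i b by rewrite /c; case: ifP.
have c1 k i : \sum_b c k i b <= 1 by rewrite /c; case: (i < k)%N.
have step (k : 'I_n) : \sum_(a : {dffun forall i, T_ i}) `|h k.+1 a - h k a| <= d.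
  pose g i (b : T_ i) := if i == k then `|p i b - q i b| else c k i b.
  have -> : \sum_(a : {dffun forall i, T_ i}) `|h k.+1 a - h k a| = \sum_(a : {dffun forall i, T_ i}) \prod_i g i (a i).
    apply: eq_bigr => a _; rewrite /h (bigD1 k) //= [X in _ - X](bigD1 k) //=.
    rewrite [X in _ * X - _](eq_bigr (fun i => c k i (a i))); last first.
      move=> i ik; rewrite /c ltnS leq_eqVlt.
      by have -> : (i == k :> nat) = false by apply/negbTE.
    rewrite -mulrBl normrM [RHS](bigD1 k) //= /g eqxx.
    rewrite /c ltnSn ltnn; congr (_ * _).
    rewrite ger0_norm; last by apply: prodr_ge0 => i _; case: ifP.
    by apply: eq_bigr => i ik; rewrite (negbTE ik).
  rewrite sum_prod_dffun; apply: (@prod_le_bound _ _ _ k).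
  - by move=> i; apply: sumr_ge0 => b _; rewrite /g; case: ifP.
  - by move=> i ik; rewrite /g (negbTE ik).
  - by under eq_bigr do rewrite /g eqxx.
have hn a : h n a = \prod_i p i (a i).
  by apply: eq_bigr => i _; rewrite /c ltn_ord.
have h0 a : h 0%N a = \prod_i q i (a i).
  by apply: eq_bigr => i _; rewrite /c ltn0.
have -> : \sum_(a : {dffun forall i, T_ i}) `|\prod_i p i (a i) - \prod_i q i (a i)| =
          \sum_(a : {dffun forall i, T_ i}) `|\sum_(k < n) (h k.+1 a - h k a)|.
  apply: eq_bigr => a _; rewrite -hn -h0.
  by rewrite -(big_mkord xpredT (fun k => h k.+1 a - h k a)) telescope_sumr.
apply: (@le_trans _ _ (\sum_(a : {dffun forall i, T_ i}) \sum_(k < n) `|h k.+1 a - h k a|)).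
  by apply: ler_sum => a _; apply: ler_norm_sum.
rewrite exchange_big /=.
apply: (@le_trans _ _ (\sum_(k < n) d)).
  by apply: ler_sum => k _; apply: step.
by rewrite sumr_const card_ord mulr_natl.
Qed.

Definition goodpol (R : realType) (n : nat) (S A : 'I_n -> finType)
  (xi : local_policy R S A) :=
  (forall i si b, 0 <= xi i si b) /\ (forall i si, \sum_b xi i si b <= 1).

Lemma jtrans_sum1 (R : realType) (n : nat) (S A : 'I_n -> finType)
  (P : local_kernel R S A) :
  (forall i s ai si', 0 <= P i s ai si') ->
  (forall i s ai, \sum_(si' : S i) P i s ai si' = 1) ->
  forall s a, \sum_(s' : jstate S) jtrans P s a s' = 1.
Proof.
move=> P0 P1 s a; rewrite /jtrans.
rewrite (@sum_prod_dffun _ _ _ (fun i b => P i s (a i) b)).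
by apply: big1 => i _; apply: P1.
Qed.

Lemma jtrans_ge0 (R : realType) (n : nat) (S A : 'I_n -> finType)
  (P : local_kernel R S A) :
  (forall i s ai si', 0 <= P i s ai si') ->
  forall s a s', 0 <= jtrans P s a s'.
Proof. by move=> P0 s a s'; apply: prodr_ge0. Qed.

Lemma jpol_ge0 (R : realType) (n : nat) (S A : 'I_n -> finType)
  (xi : local_policy R S A) : goodpol xi -> forall s a, 0 <= jpol xi s a.
Proof. by case=> x0 _ s a; apply: prodr_ge0. Qed.

Lemma jpol_sum (R : realType) (n : nat) (S A : 'I_n -> finType)
  (xi : local_policy R S A) : goodpol xi -> forall s, \sum_(a : jaction A) jpol xi s a <= 1.
Proof.
case=> x0 x1 s; rewrite /jpol.
by apply: (@sum_prod_le1 _ _ _ (fun i b => xi i (s i) b)).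
Qed.

Lemma jpol_tv (R : realType) (n : nat) (S A : 'I_n -> finType)
  (xi zeta : local_policy R S A) (d : R) : goodpol xi -> goodpol zeta ->
  (forall i si, \sum_b `|xi i si b - zeta i si b| <= d) ->
  forall s, \sum_(a : jaction A) `|jpol xi s a - jpol zeta s a| <= n%:R * d.
Proof.
case=> x0 x1 [z0 z1] tv s; rewrite /jpol.
by apply: (@tv_prod _ _ _ (fun i b => xi i (s i) b) (fun i b => zeta i (s i) b)).
Qed.

Lemma er_bnd (R : realType) (n : nat) (S A : 'I_n -> finType)
  (P : local_kernel R S A)
  (P0 : forall i s ai si', 0 <= P i s ai si')
  (P1 : forall i s ai, \sum_(si' : S i) P i s ai si' = 1)
  (xi : local_policy R S A) (r : jstate S -> jaction A -> R) :
  goodpol xi -> (forall s a, 0 <= r s a <= 1) ->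
  forall t s a, 0 <= exp_reward P xi r t s a <= 1.
Proof.
move=> gx rb; elim=> [|t IH] s a //=.
have V0 s' : 0 <= \sum_(a' : jaction A) jpol xi s' a' * exp_reward P xi r t s' a'.
  apply: sumr_ge0 => a' _; apply: mulr_ge0; first exact: jpol_ge0.
  by case/andP: (IH s' a').
have V1 s' : \sum_(a' : jaction A) jpol xi s' a' * exp_reward P xi r t s' a' <= 1.
  apply: le_trans (jpol_sum gx s'); apply: ler_sum => a' _.
  rewrite -[X in _ <= X]mulr1; apply: ler_wpM2l; first exact: jpol_ge0.
  by case/andP: (IH s' a').
apply/andP; split.
  by apply: sumr_ge0 => s' _; apply: mulr_ge0 => //; apply: jtrans_ge0.
rewrite -(jtrans_sum1 P0 P1 s a); apply: ler_sum => s' _.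
rewrite -[X in _ <= X]mulr1; apply: ler_wpM2l => //; exact: jtrans_ge0.
Qed.

Lemma er_diff (R : realType) (n : nat) (S A : 'I_n -> finType)
  (P : local_kernel R S A)
  (P0 : forall i s ai si', 0 <= P i s ai si')
  (P1 : forall i s ai, \sum_(si' : S i) P i s ai si' = 1)
  (xi zeta : local_policy R S A) (r : jstate S -> jaction A -> R) (d : R) :
  goodpol xi -> goodpol zeta -> (forall s a, 0 <= r s a <= 1) ->
  (forall i si, \sum_b `|xi i si b - zeta i si b| <= d) ->
  forall t s a, `|exp_reward P xi r t s a - exp_reward P zeta r t s a| <= t%:R * (n%:R * d).
Proof.
move=> gx gz rb tv; elim=> [|t IH] s a /=.
  by rewrite subrr normr0 mul0r.
rewrite -sumrB.
apply: le_trans (ler_norm_sum _ _ _) _.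
apply: (@le_trans _ _ (\sum_(s' : jstate S) jtrans P s a s' * (t.+1%:R * (n%:R * d)))); last first.
  by rewrite -mulr_suml (jtrans_sum1 P0 P1 s a) mul1r.
apply: ler_sum => s' _; rewrite -mulrBr normrM ger0_norm; last exact: jtrans_ge0.
apply: ler_wpM2l; first exact: jtrans_ge0.
rewrite -sumrB.
apply: le_trans (ler_norm_sum _ _ _) _.
set Ex := exp_reward P xi r t s'; set Ez := exp_reward P zeta r t s'.
have -> : \sum_(a' : jaction A) `|jpol xi s' a' * Ex a' - jpol zeta s' a' * Ez a'| =
   \sum_(a' : jaction A) `|(jpol xi s' a' - jpol zeta s' a') * Ex a' + jpol zeta s' a' * (Ex a' - Ez a')|.
  by apply: eq_bigr => a' _; congr `|_|; ring.
apply: le_trans (ler_sum _ (fun a' _ => ler_normD _ _)) _.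
rewrite big_split /= -natr1 mulrDl mul1r [X in _ <= X]addrC.
apply: lerD.
  apply: le_trans (jpol_tv gx gz tv s'); apply: ler_sum => a' _.
  rewrite normrM -[X in _ <= X]mulr1; apply: ler_wpM2l => //.
  by rewrite ger0_norm; case/andP: (er_bnd P0 P1 gx rb t s' a').
apply: (@le_trans _ _ (\sum_(a' : jaction A) jpol zeta s' a' * (t%:R * (n%:R * d)))).
  apply: ler_sum => a' _; rewrite normrM ger0_norm; last exact: jpol_ge0.
  by apply: ler_wpM2l; [exact: jpol_ge0 | exact: IH].
rewrite -mulr_suml -[X in _ <= X]mul1r; apply: ler_wpM2r; last exact: jpol_sum.
by apply: le_trans (IH s' a); apply: normr_ge0.
Qed.

Lemma geom_id (R : realType) (g : R) (N : nat) :
  (1 - g) * \sum_(0 <= t < N) g ^+ t = 1 - g ^+ N.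
Proof.
elim: N => [|N IH]; first by rewrite big_geq // mulr0 expr0 subrr.
rewrite big_nat_recr //= mulrDr IH exprS; ring.
Qed.

Lemma tgeom_id (R : realType) (g : R) (N : nat) :
  (1 - g) ^+ 2 * \sum_(0 <= t < N) t%:R * g ^+ t =
  g - N%:R * g ^+ N + (N%:R - 1) * g ^+ N.+1.
Proof.
elim: N => [|N IH]; first by rewrite big_geq // mulr0 expr0 expr1; ring.
rewrite big_nat_recr //= mulrDr IH -natr1 !exprS; ring.
Qed.

Lemma geom_le (R : realType) (g : R) (N : nat) : 0 <= g < 1 ->
  \sum_(0 <= t < N) g ^+ t <= (1 - g)^-1.
Proof.
case/andP=> g0 g1.
have h : 0 < 1 - g by rewrite subr_gt0.
rewrite -(ler_pM2l h) geom_id mulfV ?(lt0r_neq0 h) //.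
by rewrite lerBlDr lerDl exprn_ge0.
Qed.

Lemma tgeom_le (R : realType) (g : R) (N : nat) : 0 <= g < 1 ->
  \sum_(0 <= t < N) t%:R * g ^+ t <= (1 - g)^-2.
Proof.
case/andP=> g0 g1.
have h : 0 < (1 - g) ^+ 2 by rewrite exprn_gt0 // subr_gt0.
rewrite -(ler_pM2l h) tgeom_id mulfV ?(lt0r_neq0 h) //.
have gN : 0 <= g ^+ N by rewrite exprn_ge0.
have N0 : 0 <= N%:R :> R by rewrite ler0n.
have -> : g - N%:R * g ^+ N + (N%:R - 1) * g ^+ N.+1 =
          g - g ^+ N * (N%:R * (1 - g) + g) by rewrite exprS; ring.
have : 0 <= g ^+ N * (N%:R * (1 - g) + g).
  by apply: mulr_ge0 => //; apply: addr_ge0 => //; apply: mulr_ge0; rewrite // subr_ge0 ltW.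
lra.
Qed.

Lemma Qpart_cvg (R : realType) (n : nat) (S A : 'I_n -> finType)
  (P : local_kernel R S A)
  (P0 : forall i s ai si', 0 <= P i s ai si')
  (P1 : forall i s ai, \sum_(si' : S i) P i s ai si' = 1)
  (xi : local_policy R S A) (r : jstate S -> jaction A -> R) (g : R) :
  goodpol xi -> (forall s a, 0 <= r s a <= 1) -> 0 <= g < 1 ->
  forall s a,
  cvgn (fun N : nat => \sum_(0 <= t < N) g ^+ t * exp_reward P xi r t s a) /\
  0 <= Qfun P g xi r s a <= (1 - g)^-1.
Proof.
move=> gx rb /andP[g0 g1] s a.
set u := fun N : nat => _.
have t0 t : 0 <= g ^+ t * exp_reward P xi r t s a.
  by apply: mulr_ge0; [exact: exprn_ge0 | case/andP: (er_bnd P0 P1 gx rb t s a)].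
have ub N : u N <= (1 - g)^-1.
  apply: le_trans (geom_le N _); last by rewrite g0 g1.
  apply: ler_sum => t _; rewrite -[X in _ <= X]mulr1; apply: ler_wpM2l.
    exact: exprn_ge0.
  by case/andP: (er_bnd P0 P1 gx rb t s a).
have lb N : 0 <= u N by apply: sumr_ge0 => t _.
have cu : cvgn u.
  apply: nondecreasing_is_cvgn.
    apply/nondecreasing_seqP => N; rewrite /u big_nat_recr //=.
    by rewrite lerDl.
  by exists (1 - g)^-1 => _ [N _ <-].
split => //; apply/andP; split.
  by apply: limr_ge => //; apply: nearW.
by apply: limr_le => //; apply: nearW.
Qed.

Lemma Q_diff (R : realType) (n : nat) (S A : 'I_n -> finType)
  (P : local_kernel R S A)
  (P0 : forall i s ai si', 0 <= P i s ai si')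
  (P1 : forall i s ai, \sum_(si' : S i) P i s ai si' = 1)
  (xi zeta : local_policy R S A) (r : jstate S -> jaction A -> R) (g d : R) :
  goodpol xi -> goodpol zeta -> (forall s a, 0 <= r s a <= 1) -> 0 <= g < 1 ->
  0 <= d ->
  (forall i si, \sum_b `|xi i si b - zeta i si b| <= d) ->
  forall s a, `|Qfun P g xi r s a - Qfun P g zeta r s a| <= n%:R * d / (1 - g) ^+ 2.
Proof.
move=> gx gz rb gb d0 tv s a.
have [cx _] := Qpart_cvg P0 P1 gx rb gb s a.
have [cz _] := Qpart_cvg P0 P1 gz rb gb s a.
rewrite /Qfun -limB //.
set w := (_ - _)%R.
have wb N : `|w N| <= n%:R * d / (1 - g) ^+ 2.
  have -> : w N = \sum_(0 <= t < N) g ^+ t * exp_reward P xi r t s a -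
     \sum_(0 <= t < N) g ^+ t * exp_reward P zeta r t s a by [].
  rewrite -sumrB.
  apply: le_trans (ler_norm_sum _ _ _) _.
  apply: (@le_trans _ _ (\sum_(0 <= t < N) t%:R * g ^+ t * (n%:R * d))).
    apply: ler_sum => t _; rewrite -mulrBr normrM ger0_norm; last first.
      by apply: exprn_ge0; case/andP: gb.
    rewrite (mulrC t%:R) -mulrA; apply: ler_wpM2l; first by apply: exprn_ge0; case/andP: gb.
    exact: (er_diff P0 P1 gx gz rb tv).
  rewrite -mulr_suml mulrC; apply: ler_wpM2l.
    by apply: mulr_ge0; rewrite ?ler0n.
  exact: tgeom_le.
have cw : cvgn w by apply: is_cvgB.
rewrite ler_norml; apply/andP; split.
  by apply: limr_ge => //; apply: nearW => N; have := wb N; rewrite ler_norml => /andP[].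
by apply: limr_le => //; apply: nearW => N; have := wb N; rewrite ler_norml => /andP[].
Qed.

Lemma sum_invcard (R : realType) (T : finType) :
  \sum_(b : T) (#|T|%:R : R)^-1 <= 1.
Proof.
rewrite sumr_const (_ : #|xpredT| = #|T|) //.
have [->|N0] := eqVneq #|T| 0%N; first by rewrite mulr0n.
by rewrite -[_ *+ _]mulr_natr mulVf // pnatr_eq0.
Qed.

Lemma softmax_good (R : realType) (n : nat) (S A : 'I_n -> finType)
  (theta : forall i : 'I_n, S i -> A i -> R) : goodpol (softmax theta).
Proof.
split=> [i si b|i si]; rewrite /softmax.
  by apply: divr_ge0; [exact: expR_ge0 | apply: sumr_ge0 => c _; exact: expR_ge0].
rewrite -mulr_suml.
set Z := \sum_(b : A i) _.
have [->|Z0] := eqVneq Z 0; first by rewrite mul0r.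
by rewrite mulfV.
Qed.

Lemma explore_good (R : realType) (n : nat) (S A : 'I_n -> finType)
  (eps : R) (xi : local_policy R S A) :
  0 <= eps <= 1 -> goodpol xi -> goodpol (explore eps xi).
Proof.
case/andP=> e0 e1 [x0 x1]; split=> [i si b|i si]; rewrite /explore.
  apply: addr_ge0; first by apply: mulr_ge0; rewrite ?subr_ge0.
  by apply: divr_ge0; rewrite ?ler0n.
rewrite big_split /= -mulr_sumr.
have h1 : (1 - eps) * \sum_b xi i si b <= 1 - eps.
  by rewrite -[X in _ <= X]mulr1; apply: ler_wpM2l; rewrite ?subr_ge0.
have h2 : \sum_(b : A i) eps / #|A i|%:R <= eps.
  rewrite -mulr_sumr -[X in _ <= X]mulr1; apply: ler_wpM2l => //.
  exact: sum_invcard.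
lra.
Qed.

Lemma explore_tv (R : realType) (n : nat) (S A : 'I_n -> finType)
  (eps : R) (xi : local_policy R S A) :
  0 <= eps <= 1 -> goodpol xi ->
  forall (i : 'I_n) (si : S i), \sum_(b : A i) `|@explore _ _ _ _ eps xi i si b - xi i si b| <= 2 * eps.
Proof.
case/andP=> e0 e1 [x0 x1] i si; rewrite /explore.
have -> : \sum_b `|(1 - eps) * xi i si b + eps / #|A i|%:R - xi i si b| =
   eps * \sum_b `|(#|A i|%:R)^-1 - xi i si b|.
  rewrite mulr_sumr; apply: eq_bigr => b _.
  have -> : (1 - eps) * xi i si b + eps / #|A i|%:R - xi i si b =
     eps * ((#|A i|%:R)^-1 - xi i si b) by ring.
  by rewrite normrM ger0_norm.
rewrite mulrC; apply: ler_wpM2r => //.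
apply: (@le_trans _ _ (\sum_(b : A i) ((#|A i|%:R)^-1 + xi i si b))).
  apply: ler_sum => b _; apply: le_trans (ler_normB _ _) _.
  by rewrite !ger0_norm ?invr_ge0 ?ler0n.
rewrite big_split /=.
have := sum_invcard R (A i); have := x1 i si; lra.
Qed.

Definition pp (R : realType) (n : nat) (S A : 'I_n -> finType)
  (xi : local_policy R S A) (i : 'I_n) (ai : A i) (s : jstate S) :
  forall j : 'I_n, A j -> R :=
  fun j b => if j == i then (Tagged A b == Tagged A ai)%:R else xi j (s j) b.
Arguments pp {R n S A} xi {i} ai s j b.

Lemma Qbar_eq (R : realType) (n : nat) (S A : 'I_n -> finType)
  (P : local_kernel R S A) (g : R) (xi : local_policy R S A)
  (r : jstate S -> jaction A -> R) (i : 'I_n) (s : jstate S) (ai : A i) :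
  Qbar P g xi r s ai =
  \sum_(a : jaction A) (\prod_j pp xi ai s j (a j)) * Qfun P g xi r s a.
Proof.
rewrite /Qbar big_mkcond; apply: eq_bigr => a _.
rewrite [in RHS](bigD1 i) //= /pp eqxx.
have -> : (Tagged A (a i) == Tagged A ai) = (a i == ai).
  by rewrite eq_Tagged.
case: (a i == ai); last by rewrite mul0r mul0r.
rewrite mul1r; congr (_ * _); apply: eq_bigr => j ji.
by rewrite (negbTE ji).
Qed.

Lemma pp_ge0 (R : realType) (n : nat) (S A : 'I_n -> finType)
  (xi : local_policy R S A) (i : 'I_n) (ai : A i) (s : jstate S) :
  goodpol xi -> forall j b, 0 <= pp xi ai s j b.
Proof. by case=> x0 _ j b; rewrite /pp; case: ifP. Qed.

Lemma pp_sum (R : realType) (n : nat) (S A : 'I_n -> finType)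
  (xi : local_policy R S A) (i : 'I_n) (ai : A i) (s : jstate S) :
  goodpol xi -> forall j, \sum_b pp xi ai s j b <= 1.
Proof.
case=> x0 x1 j; rewrite /pp.
have [eji|nji] := eqVneq j i; last exact: x1.
subst j.
rewrite (bigD1 ai) //= eqxx big1 ?addr0 // => b bai.
by rewrite eq_Tagged /= (negbTE bai).
Qed.

Lemma pp_tv (R : realType) (n : nat) (S A : 'I_n -> finType)
  (xi zeta : local_policy R S A) (i : 'I_n) (ai : A i) (s : jstate S) (d : R) :
  0 <= d -> (forall i si, \sum_b `|xi i si b - zeta i si b| <= d) ->
  forall j, \sum_b `|pp xi ai s j b - pp zeta ai s j b| <= d.
Proof.
move=> d0 tv j; rewrite /pp.
have [eji|nji] := eqVneq j i; last exact: tv.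
subst j.
by rewrite big1 // => b _; rewrite subrr normr0.
Qed.

Unset Implicit Arguments.

Theorem mainTheorem15 (R : realType) (n : nat) (S A : 'I_n -> finType)
  (e : rel 'I_n) (e_sym : symmetric e)
  (P : local_kernel R S A)
  (P_ge0 : forall i s ai si', 0 <= P i s ai si')
  (P_sum1 : forall i s ai, \sum_(si' : S i) P i s ai si' = 1)
  (P_local : forall i (s s' : jstate S) ai si',
      (forall j, dist_le e 1 i j -> s j = s' j) -> P i s ai si' = P i s' ai si')
  (kappa_r : nat) (r : 'I_n -> jstate S -> jaction A -> R)
  (r_bnd : forall i s a, 0 <= r i s a <= 1)
  (r_local : forall i (s s' : jstate S) (a a' : jaction A),
      (forall j, dist_le e kappa_r i j -> s j = s' j /\ a j = a' j) ->
      r i s a = r i s' a')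
  (gamma : R) (hgamma : 0 < gamma < 1)
  (eps : R) (heps : 0 <= eps <= 1)
  (theta : forall i : 'I_n, S i -> A i -> R) :
  forall (i : 'I_n) (s : jstate S) (ai : A i),
    `| Qbar P gamma (explore eps (softmax theta)) (r i) s ai
       - Qbar P gamma (softmax theta) (r i) s ai |
    <= 6 * n%:R * eps / (1 - gamma) ^+ 2.
Proof.
move=> i s ai.
have gx := softmax_good theta.
have gh := explore_good heps gx.
have tv := explore_tv heps gx.
have rb : forall s a, 0 <= r i s a <= 1 by move=> s' a'; exact: r_bnd.
have gb : 0 <= gamma < 1 by case/andP: hgamma => g0 g1; rewrite ltW.
have e0 : 0 <= eps by case/andP: heps.
have d0 : 0 <= 2 * eps by rewrite mulr_ge0.
set xh := explore eps (softmax theta).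
set x := softmax theta.
rewrite !Qbar_eq -sumrB.
set Wh := fun a : jaction A => \prod_j pp xh ai s j (a j).
set W := fun a : jaction A => \prod_j pp x ai s j (a j).
set Qh := Qfun P gamma xh (r i) s.
set Q := Qfun P gamma x (r i) s.
have -> : \sum_(a : jaction A) (Wh a * Qh a - W a * Q a) =
  \sum_(a : jaction A) ((Wh a - W a) * Qh a + W a * (Qh a - Q a)).
  by apply: eq_bigr => a _; ring.
apply: le_trans (ler_norm_sum _ _ _) _.
apply: le_trans (ler_sum _ (fun a _ => ler_normD _ _)) _.
rewrite big_split /=.
have H1 : \sum_(a : jaction A) `|(Wh a - W a) * Qh a| <= n%:R * (2 * eps) * (1 - gamma)^-1.
  apply: (@le_trans _ _ (\sum_(a : jaction A) `|Wh a - W a| * (1 - gamma)^-1)).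
    apply: ler_sum => a _; rewrite normrM; apply: ler_wpM2l => //.
    have [_ /andP[q0 q1]] := Qpart_cvg P_ge0 P_sum1 gh rb gb s a.
    by rewrite ger0_norm.
  rewrite -mulr_suml; apply: ler_wpM2r; first by rewrite invr_ge0 subr_ge0 ltW //; case/andP: gb.
  apply: (@tv_prod _ _ _ (pp xh ai s) (pp x ai s)).
  - exact: pp_ge0.
  - exact: pp_ge0.
  - exact: pp_sum.
  - exact: pp_sum.
  - by apply: pp_tv => // j sj; apply: tv.
have H2 : \sum_(a : jaction A) `|W a * (Qh a - Q a)| <= 1 * (n%:R * (2 * eps) / (1 - gamma) ^+ 2).
  apply: (@le_trans _ _ (\sum_(a : jaction A) W a * (n%:R * (2 * eps) / (1 - gamma) ^+ 2))).
    apply: ler_sum => a _; rewrite normrM ger0_norm; last by apply: prodr_ge0 => j _; exact: pp_ge0.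
    apply: ler_wpM2l; first by apply: prodr_ge0 => j _; exact: pp_ge0.
    apply: (Q_diff P_ge0 P_sum1 gh gx rb gb d0) => j sj; exact: tv.
  rewrite -mulr_suml; apply: ler_wpM2r.
    by apply: mulr_ge0; [apply: mulr_ge0; rewrite ?ler0n | rewrite invr_ge0 exprn_ge0 // subr_ge0 ltW //; case/andP: gb].
  by apply: (@sum_prod_le1 _ _ _ (pp x ai s)); [exact: pp_ge0 | exact: pp_sum].
apply: le_trans (lerD H1 H2) _.
have c1 : 1 <= (1 - gamma)^-1.
  case/andP: hgamma => g0 g1.
  by rewrite invf_ge1 ?subr_gt0 // lerBlDr lerDl ltW.
rewrite -exprVn.
set c := (1 - gamma)^-1.
have xn : 0 <= n%:R * eps by rewrite mulr_ge0 ?ler0n.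
have : 0 <= n%:R * eps * c * (c - 1) by rewrite mulr_ge0 // ?subr_ge0 // mulr_ge0 // (le_trans _ c1).
nra.
Qed.
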